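(* Let $H$ be a connected graph with vertices $v_1,\ldots,v_d$, let $\Gamma$ be a finite group with identity $e$, and let $D=\{\gamma_1,\ldots,\gamma_d\}\subseteq\Gamma$ with $|D|=d$. Let $\widetilde{H}$ be the graph with vertex set $\Gamma$ and edge set $\{(\gamma\gamma_i,\gamma\gamma_j): \gamma\in\Gamma,\ v_iv_j\in E(H)\}$, and for $\gamma\in\Gamma$ let $\widetilde{H}_\gamma$ be the subgraph of $\widetilde{H}$ induced by $\{\gamma\gamma_1,\ldots,\gamma\gamma_d\}$. Then: a) If $(\Gamma,D)$ satisfies condition $\mathcal{G}(2)$ then $\widetilde{H}$ is a cluster of $|\Gamma|$ copies of $H$ (namely of the subgraphs $\widetilde{H}_\gamma$, $\gamma\in\Gamma$). b) If $(\Gamma,D)$ satisfies condition $\mathcal{G}(p)$ then the cluster-girth of $\widetilde{H}$ (with respect to the parts $\widetilde{H}_\gamma$, $\gamma\in\Gamma$) is at least $p+1$. c) The connected components of $\widetilde{H}$ are pairwise isomorphic, and the component containing $e$ is a Cayley graph of some subgroup of $\Gamma$.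
   Context: For $p\geq 1$, the pair $(\Gamma,D)$ satisfies condition $\mathcal{R}(p)$ if for every sequence of indices $i_0,\ldots,i_{2p-1}\in\{1,\ldots,d\}$ the equality $\gamma_{i_0}\gamma_{i_1}^{-1}\gamma_{i_2}\gamma_{i_3}^{-1}\cdots\gamma_{i_{2p-2}}\gamma_{i_{2p-1}}^{-1}=e$ implies $i_l=i_{l+1}$ for some $l\in\{0,\ldots,2p-1\}$ (indices modulo $2p$). It satisfies $\mathcal{G}(p)$ if it satisfies $\mathcal{R}(1),\ldots,\mathcal{R}(p)$. A finite graph $X$ is a cluster of induced subgraphs $X_1,\ldots,X_k$ (its parts) if $X=X_1\cup\cdots\cup X_k$ and for all $i\neq j$, $X_i\cap X_j$ is empty or a single vertex. The cluster-girth (with respect to parts $X_1,\ldots,X_k$) is the smallest $l\geq 3$ such that there exist pairwise distinct vertices $v_0,\ldots,v_{l-1}$ and pairwise distinct indices $i_0,\ldots,i_{l-1}$ with $v_j\in V(X_{i_{j-1}})\cap V(X_{i_j})$ for $j=0,\ldots,l-1$ (indices modulo $l$); it is infinite if no such cycle exists. *)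

(* Defs.v *)
From mathcomp Require Import all_boot all_fingroup.
Set Implicit Arguments. Unset Strict Implicit. Unset Printing Implicit Defensive.
Local Open Scope group_scope.

(* Condition R(p) for (Gamma, D) with D = {gam i | i < d}:
   for every sequence i_0, ..., i_{2p-1} (the first 2p values of f),
   gam i_0 * (gam i_1)^-1 * ... * gam i_{2p-2} * (gam i_{2p-1})^-1 = 1
   implies i_l = i_{l+1} for some l, indices modulo 2p. *)
Definition condR (gT : finGroupType) (d : nat) (gam : 'I_d -> gT) (p : nat) : Prop :=
  forall f : nat -> 'I_d,
    \prod_(k < p) (gam (f k.*2) * (gam (f k.*2.+1))^-1) = 1 ->
    exists2 l, l < p.*2 & f l = f (l.+1 %% p.*2).

Definition condG (gT : finGroupType) (d : nat) (gam : 'I_d -> gT) (p : nat) : Prop :=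
  forall q, 1 <= q <= p -> condR gam q.

Definition htilde (gT : finGroupType) (d : nat) (h : rel 'I_d) (gam : 'I_d -> gT)
  : rel gT :=
  fun x y => [exists g : gT, exists i : 'I_d, exists j : 'I_d,
               [&& h i j, x == g * gam i & y == g * gam j]].

(* Vertex set of H~_g (the part is the induced subgraph of H~ on this set). *)
Definition hpart (gT : finGroupType) (d : nat) (gam : 'I_d -> gT) (g : gT) : {set gT} :=
  [set g * gam i | i : 'I_d].

Definition is_cluster (V I : finType) (e : rel V) (P : I -> {set V}) : Prop :=
  [/\ (forall v : V, exists i, v \in P i),
      (forall x y, e x y -> exists i, x \in P i /\ y \in P i)
    & (forall i j, i != j -> #|P i :&: P j| <= 1)].

Definition iso_to_induced (T V : finType) (h : rel T) (e : rel V) (A : {set V}) : Prop :=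
  exists f : T -> V, [/\ injective f, [set f t | t : T] = A
                       & forall s t, h s t = e (f s) (f t)].

Definition iso_induced (V : finType) (e : rel V) (A B : {set V}) : Prop :=
  exists f : V -> V, [/\ {in A &, injective f}, f @: A = B
                       & {in A &, forall x y, e x y = e (f x) (f y)}].

(* A cluster-cycle of length l w.r.t. parts P: pairwise distinct vertices
   v_0..v_{l-1} and pairwise distinct indices i_0..i_{l-1} with
   v_j in P (i_{j-1}) and v_j in P (i_j), indices modulo l. *)
Definition cluster_cycle (V I : finType) (P : I -> {set V}) (l : nat) : Prop :=
  exists (v : nat -> V) (idx : nat -> I),
    [/\ {in [pred j | j < l] &, injective v},
        {in [pred j | j < l] &, injective idx}
      & forall j, j < l -> v j \in P (idx ((j + l).-1 %% l)) /\ v j \in P (idx j)].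

(* The cluster-girth (smallest l >= 3 with a cluster-cycle of length l,
   infinite if none) is at least n. *)
Definition cluster_girth_ge (V I : finType) (P : I -> {set V}) (n : nat) : Prop :=
  forall l, 3 <= l -> l < n -> ~ cluster_cycle P l.

Definition component (V : finType) (e : rel V) (x : V) : {set V} :=
  [set y | connect e x y].

Definition is_cayley_graph_of (gT : finGroupType) (e : rel gT) (A : {set gT})
  (K : {group gT}) : Prop :=
  A = K /\
  exists S : {set gT}, [/\ S \subset K, S^-1 = S, 1 \notin S
                         & {in K &, forall x y, e x y = (x^-1 * y \in S)}].

(* Main.v *)
Require Import Defs.
From mathcomp Require Import all_boot all_fingroup zify.
Local Open Scope group_scope.

Lemma pr_ne l j : 1 < l -> j < l -> (j + l).-1 %% l != j.
Proof.
case: j => [|k] l1 Hj.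
  rewrite add0n modn_small; lia.
have -> : (k.+1 + l).-1 = k + l by lia.
rewrite modnDr modn_small; lia.
Qed.

Lemma pr_succ l k : k < l -> (k.+1 + l).-1 %% l = k.
Proof.
move=> kl; have -> : (k.+1 + l).-1 = k + l by lia.
by rewrite modnDr modn_small.
Qed.

Lemma pr_S l j : j < l -> ((j.+1 %% l) + l).-1 %% l = j.
Proof.
move=> jl; case: (ltngtP j.+1 l) => H.
- by rewrite (modn_small H) pr_succ.
- lia.
- rewrite H modnn add0n modn_small; lia.
Qed.

Lemma tele_aux (T : finGroupType) (u w z : T) : u * w * (w^-1 * z) = u * z.
Proof. by rewrite !mulgA mulgK. Qed.

Lemma tele (T : finGroupType) (x : nat -> T) n :
  \prod_(k < n) ((x k)^-1 * x k.+1) = (x 0)^-1 * x n.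
Proof.
elim: n => [|n IH]; first by rewrite big_ord0 mulVg.
rewrite big_ord_recr /= IH; exact: tele_aux.
Qed.

Section Aux.
Variables (gT : finGroupType) (d : nat) (h : rel 'I_d) (gam : 'I_d -> gT).

Definition Sset : {set gT} :=
  [set z | [exists i, exists j, h i j && (z == (gam i)^-1 * gam j)]].

Lemma htildeE x y : htilde h gam x y = (x^-1 * y \in Sset).
Proof.
rewrite inE; apply/existsP/existsP.
  move=> [g /existsP [i /existsP [j /and3P [hij /eqP -> /eqP ->]]]].
  exists i; apply/existsP; exists j; rewrite hij /=.
  by rewrite invMg -mulgA (mulgA g^-1) mulVg mul1g.
move=> [i /existsP [j /andP [hij /eqP E]]].
exists (x * (gam i)^-1); apply/existsP; exists i; apply/existsP; exists j.
rewrite hij mulgKV eqxx /= -mulgA -E mulgA mulgV mul1g //.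
Qed.

Lemma htilde_mul k x y : htilde h gam (k * x) (k * y) = htilde h gam x y.
Proof. by rewrite !htildeE invMg -mulgA (mulgA k^-1) mulVg mul1g. Qed.

Lemma connect_mul1 k x y :
  connect (htilde h gam) x y -> connect (htilde h gam) (k * x) (k * y).
Proof.
move=> /connectP [p pth ->]; apply/connectP; exists (map (mulg k) p).
  elim: p x pth => [|z p IH] x //= /andP [exz pz].
  by rewrite htilde_mul exz IH.
by rewrite last_map.
Qed.

Lemma connect_mul k x y :
  connect (htilde h gam) (k * x) (k * y) = connect (htilde h gam) x y.
Proof.
apply/idP/idP; last exact: connect_mul1.
by move=> /(connect_mul1 k^-1); rewrite !mulKg.
Qed.

Lemma condR2_eq (gam_inj : injective gam) (HR : condR gam 2) {g g' a b c e} :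
  g * gam a = g' * gam b -> g * gam c = g' * gam e -> a != c -> g = g'.
Proof.
move=> E1 E2 nac.
pose f n := nth a [:: a; b; e; c] n.
have F1 : gam a * (gam b)^-1 = g^-1 * g'.
  by rewrite -(mulKg g (gam a)) E1 !mulgA mulgK.
have F2 : gam c * (gam e)^-1 = g^-1 * g'.
  by rewrite -(mulKg g (gam c)) E2 !mulgA mulgK.
have Q : gam a * (gam b)^-1 * (gam e * (gam c)^-1) = 1.
  by rewrite F1 -F2 !mulgA mulgKV mulgV.
have P : \prod_(k < 2) (gam (f k.*2) * (gam (f k.*2.+1))^-1) = 1.
  rewrite big_ord_recr big_ord_recr big_ord0 /= mul1g; exact: Q.
have [l l4] := HR f P.
case: l l4 => [|[|[|[|l]]]] //= _ /=; rewrite /f /=.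
- by move=> eab; apply: (mulIg (gam a)); rewrite E1 eab.
- by move=> ebe; case/negP: nac; apply/eqP/gam_inj/(mulgI g); rewrite E1 E2 ebe.
- by move=> eec; apply: (mulIg (gam c)); rewrite E2 eec.
- by move=> eca; rewrite eca eqxx in nac.
Qed.

Lemma part_a (h_irr : irreflexive h) (h_nonempty : 0 < d)
  (gam_inj : injective gam) (HG : condG gam 2) :
     is_cluster (htilde h gam) (hpart gam)
     /\ (forall g : gT, iso_to_induced h (htilde h gam) (hpart gam g)).
Proof.
have HR : condR gam 2 by apply: HG.
pose i0 := Ordinal h_nonempty.
split.
  split.
  - move=> v; exists (v * (gam i0)^-1); apply/imsetP; exists i0 => //.
    by rewrite mulgKV.
  - move=> x y /existsP [g /existsP [i /existsP [j /and3P [_ /eqP -> /eqP ->]]]].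
    by exists g; split; apply/imsetP; [exists i | exists j].
  - move=> g g' ngg; rewrite leqNgt; apply/negP => /card_gt1P [x [y [xi yi nxy]]].
    move: xi yi nxy; rewrite !in_setI => /andP [/imsetP [a _ ->] /imsetP [b _ Eab]].
    move=> /andP [/imsetP [c _ ->] /imsetP [e _ Ece]] nxy.
    case/negP: ngg; apply/eqP; apply: (condR2_eq gam_inj HR Eab Ece).
    by apply: contraNneq nxy => ->.
move=> g; exists (fun t => g * gam t); split.
- by move=> s t /mulgI /gam_inj.
- by [].
move=> s t; apply/idP/idP.
  move=> hst; apply/existsP; exists g; apply/existsP; exists s; apply/existsP; exists t.
  by rewrite hst !eqxx.
move=> /existsP [g' /existsP [i /existsP [j /and3P [hij /eqP Es /eqP Et]]]].
case: (eqVneq s t) => [st|nst].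
  subst t; have ij : i = j by apply/gam_inj/(mulgI g'); rewrite -Es -Et.
  by rewrite ij h_irr in hij.
have gg : g = g' := condR2_eq gam_inj HR Es Et nst.
subst g'.
have -> : s = i by apply/gam_inj/(mulgI g).
have -> : t = j by apply/gam_inj/(mulgI g).
by [].
Qed.

Lemma part_c (h_sym : symmetric h) (h_irr : irreflexive h)
  (gam_inj : injective gam) :
  (forall x y : gT, iso_induced (htilde h gam)
                       (component (htilde h gam) x) (component (htilde h gam) y))
   /\ exists K : {group gT},
        is_cayley_graph_of (htilde h gam) (component (htilde h gam) 1) K.
Proof.
split.
  move=> x y; exists (fun z => y * x^-1 * z); split.
  - by move=> u w _ _ /= /mulgI.
  - apply/setP => z; rewrite inE; apply/imsetP/idP.
      move=> [w]; rewrite inE => cw ->.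
      by rewrite -{1}(mulgKV x y) connect_mul.
    move=> cz; exists (x * y^-1 * z).
      by rewrite inE -(connect_mul (y * x^-1)) !mulgA !mulgKV mulgV mul1g.
    by rewrite !mulgA !mulgKV mulgV mul1g.
  - by move=> u w _ _ /=; rewrite htilde_mul.
have gs : group_set (component (htilde h gam) 1).
  apply/group_setP; split; first by rewrite inE connect0.
  move=> u w; rewrite !inE => cu cw; apply: connect_trans cu _.
  by rewrite -{1}(mulg1 u) connect_mul.
exists (Group gs); split; first by [].
exists Sset; split.
- apply/subsetP => s Hs; rewrite inE; apply: connect1.
  by rewrite htildeE invg1 mul1g.
- apply/setP => z; rewrite mem_invg !inE; apply/existsP/existsP.
    move=> [i /existsP [j /andP [hij /eqP E]]].
    exists j; apply/existsP; exists i; rewrite h_sym hij /=.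
    by rewrite -(invgK z) E invMg invgK.
  move=> [i /existsP [j /andP [hij /eqP E]]].
  exists j; apply/existsP; exists i; rewrite h_sym hij /=.
  by rewrite E invMg invgK.
- rewrite inE; apply/negP => /existsP [i /existsP [j /andP [hij /eqP E]]].
  have gij : gam i = gam j by apply: (mulgI (gam i)^-1); rewrite mulVg E.
  by rewrite (gam_inj _ _ gij) h_irr in hij.
- by move=> u w _ _; exact: htildeE.
Qed.


Lemma part_b (h_nonempty : 0 < d) p :
  1 <= p -> condG gam p -> cluster_girth_ge (hpart gam) p.+1.
Proof.
move=> p1 HG l l3 lp [v [idx [vinj iinj Hv]]].
have l1 : 1 < l by lia.
have l0 : 0 < l by lia.
have HR : condR gam l by apply: HG; apply/andP; split; lia.
pose pr j := (j + l).-1 %% l.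
pose x j := idx (pr j).
pose i0 := Ordinal h_nonempty.
pose a j := odflt i0 [pick i | v j == x j * gam i].
pose b j := odflt i0 [pick i | v j == idx j * gam i].
have Ha : forall j, j < l -> v j = x j * gam (a j).
  move=> j jl; rewrite /a; case: pickP => [i /eqP //|H].
  have := Hv j jl; rewrite /hpart => -[/imsetP [i _ E] _].
  by move: (H i); rewrite /x /pr -E eqxx.
have Hb : forall j, j < l -> v j = idx j * gam (b j).
  move=> j jl; rewrite /b; case: pickP => [i /eqP //|H].
  have := Hv j jl; rewrite /hpart => -[_ /imsetP [i _ E]].
  by move: (H i); rewrite -E eqxx.
have Hx : forall k, k < l -> x k.+1 = idx k.
  by move=> k kl; rewrite /x /pr pr_succ.
have Hab : forall k, k < l -> gam (a k) * (gam (b k))^-1 = (x k)^-1 * x k.+1.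
  move=> k kl; rewrite Hx //.
  by rewrite -(mulKg (x k) (gam (a k))) -Ha // Hb // !mulgA mulgK.
pose f n := if odd n then b n./2 else a n./2.
have P : \prod_(k < l) (gam (f k.*2) * (gam (f k.*2.+1))^-1) = 1.
  rewrite (eq_bigr (fun k : 'I_l => (x k)^-1 * x k.+1)); last first.
    move=> k _; rewrite /f /= odd_double /= uphalf_double doubleK; exact: Hab.
  rewrite tele.
  have -> : x l = x 0.
    rewrite /x /pr add0n; congr idx.
    have -> : (l + l).-1 = l.-1 + l by lia.
    by rewrite modnDr.
  exact: mulVg.
have [l' l'lt E] := HR f P.
have Hl' := odd_double_half l'.
pose k := l'./2.
case Ho: (odd l') in Hl'.
- have kl : k < l by rewrite /= in Hl'; lia.
  have e1 : f l' = b k by rewrite /f Ho.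
  have e2 : f (l'.+1 %% l.*2) = a (k.+1 %% l).
    case: (ltngtP k.+1 l) => H.
    + rewrite (modn_small H) modn_small; last by rewrite /= in Hl'; lia.
      have -> : l'.+1 = (k.+1).*2 by rewrite /= in Hl'; lia.
      by rewrite /f odd_double doubleK.
    + lia.
    + have -> : l'.+1 = l.*2 by rewrite /= in Hl'; lia.
      by rewrite -H !modnn.
  have E' : b k = a (k.+1 %% l) by rewrite -e1 -e2.
  have jl : k.+1 %% l < l by rewrite ltn_pmod.
  have vj : v (k.+1 %% l) = v k.
    by rewrite (Ha _ jl) (Hb k kl) -E' /x /pr pr_S.
  have jk := vinj _ _ jl kl vj.
  have := pr_ne _ _ l1 kl.
  by rewrite -{1}jk pr_S // eqxx.
- have kl : k < l by rewrite /= in Hl'; lia.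
  have e1 : f l' = a k by rewrite /f Ho.
  have e2 : f (l'.+1 %% l.*2) = b k.
    rewrite modn_small; last by rewrite /= in Hl'; lia.
    have -> : l'.+1 = k.*2.+1 by rewrite /= in Hl'; lia.
    by rewrite /f /= odd_double /= uphalf_double.
  have E' : a k = b k by rewrite -e1 -e2.
  have xk : x k = idx k.
    apply: (mulIg (gam (a k))); rewrite -Ha // E' -Hb //.
  have prl : pr k < l by rewrite /pr ltn_pmod.
  have := iinj _ _ prl kl xk.
  by move/eqP; rewrite (negbTE (pr_ne _ _ l1 kl)).
Qed.

End Aux.

Theorem proposition5p3 (gT : finGroupType) (d : nat) (h : rel 'I_d)
  (gam : 'I_d -> gT)
  (h_sym : symmetric h) (h_irr : irreflexive h)
  (h_nonempty : 0 < d) (h_conn : forall i j, connect h i j)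
  (gam_inj : injective gam) :
  (* a) *)
  (condG gam 2 ->
     is_cluster (htilde h gam) (hpart gam)
     /\ (forall g : gT, iso_to_induced h (htilde h gam) (hpart gam g)))
  /\
  (* b) *)
  (forall p, 1 <= p -> condG gam p -> cluster_girth_ge (hpart gam) p.+1)
  /\
  (* c) *)
  ((forall x y : gT, iso_induced (htilde h gam)
                       (component (htilde h gam) x) (component (htilde h gam) y))
   /\ exists K : {group gT},
        is_cayley_graph_of (htilde h gam) (component (htilde h gam) 1) K).
Proof.
split; first exact: part_a.
split; first by move=> p; exact: part_b.
exact: part_c.
Qed.
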